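(* For every $m$, the first $\varepsilon\tau$-theorem holds for $\varepsilon\tau(\mathbf{LC}_m)$.
   Context: $\mathbf{LC}_m$ is the intermediate propositional logic axiomatized over intuitionistic propositional logic by the schemas $\mathit{Lin}$: $(A\to B)\lor(B\to A)$ and $B_m$: $(A_1\to A_2)\lor(A_2\to A_3)\lor\dots\lor(A_m\to A_{m+1})$ (the $m$-valued Gödel logic). $\varepsilon\tau$-terms: $\varepsilon x\,A(x)$, $\tau x\,A(x)$ for formulas $A(x)$. Critical formulas: $A(t)\to A(\varepsilon x\,A(x))$ and $A(\tau x\,A(x))\to A(t)$. $\vdash_{\varepsilon\tau(\mathbf{L})}B$: $B$ derivable in the quantifier-free language with $\varepsilon\tau$-terms from critical formulas using substitution instances of theorems of $\mathbf{L}$ and modus ponens; $\vdash_{\mathbf{L}}$ is the same without critical formulas. $\varepsilon\tau(\mathbf{L})$ has the first $\varepsilon\tau$-theorem if whenever $\vdash_{\varepsilon\tau(\mathbf{L})}A(e_1,\dots,e_n)$ for $\varepsilon$- or $\tau$-terms $e_i$, there are $\varepsilon\tau$-free terms $t_i^j$ with $\vdash_{\mathbf{L}}A(t_1^1,\dots,t_n^1)\lor\dots\lor A(t_1^k,\dots,t_n^k)$. *)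

(* Defs.v *)
From mathcomp Require Import all_boot.
Set Implicit Arguments. Unset Strict Implicit. Unset Printing Implicit Defensive.

Inductive pform : Type :=
| pvar : nat -> pform
| pbot : pform
| pimp : pform -> pform -> pform
| pand : pform -> pform -> pform
| por  : pform -> pform -> pform.

(* chain_disj f j n = (f j -> f (j+1)) \/ ... \/ (f (j+n-1) -> f (j+n)),
   right-nested; for n >= 1. *)
Fixpoint chain_disj (f : nat -> pform) (j n : nat) : pform :=
  match n with
  | 0 => pbot
  | n'.+1 => if n' is 0 then pimp (f j) (f j.+1)
             else por (pimp (f j) (f j.+1)) (chain_disj f j.+1 n')
  end.

Definition Bm_axiom (m : nat) (f : nat -> pform) : pform := chain_disj f 1 m.

Inductive LCm_thm (m : nat) : pform -> Prop :=
| ip_k A B : LCm_thm m (pimp A (pimp B A))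
| ip_s A B C : LCm_thm m (pimp (pimp A (pimp B C)) (pimp (pimp A B) (pimp A C)))
| ip_andE1 A B : LCm_thm m (pimp (pand A B) A)
| ip_andE2 A B : LCm_thm m (pimp (pand A B) B)
| ip_andI A B : LCm_thm m (pimp A (pimp B (pand A B)))
| ip_orI1 A B : LCm_thm m (pimp A (por A B))
| ip_orI2 A B : LCm_thm m (pimp B (por A B))
| ip_orE A B C : LCm_thm m (pimp (pimp A C) (pimp (pimp B C) (pimp (por A B) C)))
| ip_efq A : LCm_thm m (pimp pbot A)
| lc_lin A B : LCm_thm m (por (pimp A B) (pimp B A))
| lc_Bm f : LCm_thm m (Bm_axiom m f)
| lc_mp A B : LCm_thm m (pimp A B) -> LCm_thm m A -> LCm_thm m B.

(* Free variables are named
   (tvar x), variables bound by eps/tau are de Bruijn indices (tbvar i);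
   teps A stands for  eps x A(x)  where A(x) is A with index 0 read as x. *)

Section Syntax.
Variables (F Pr : Type) (arF : F -> nat) (arP : Pr -> nat).

Inductive term : Type :=
| tvar : nat -> term
| tbvar : nat -> term
| tapp : F -> seq term -> term
| teps : formula -> term
| ttau : formula -> term
with formula : Type :=
| fatom : Pr -> seq term -> formula
| fbot : formula
| fimp : formula -> formula -> formula
| fand : formula -> formula -> formula
| f_or : formula -> formula -> formula.

Fixpoint wf_term (k : nat) (t : term) : bool :=
  match t with
  | tvar _ => true
  | tbvar i => i < k
  | tapp f ts => (size ts == arF f) && all (wf_term k) ts
  | teps A => wf_form k.+1 A
  | ttau A => wf_form k.+1 A
  end
with wf_form (k : nat) (A : formula) : bool :=
  match A with
  | fatom P ts => (size ts == arP P) && all (wf_term k) ts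
  | fbot => true
  | fimp A B => wf_form k A && wf_form k B
  | fand A B => wf_form k A && wf_form k B
  | f_or A B => wf_form k A && wf_form k B
  end.

Fixpoint etfree_term (t : term) : bool :=
  match t with
  | tvar _ => true
  | tbvar _ => true
  | tapp _ ts => all etfree_term ts
  | teps _ => false
  | ttau _ => false
  end
with etfree_form (A : formula) : bool :=
  match A with
  | fatom _ ts => all etfree_term ts
  | fbot => true
  | fimp A B => etfree_form A && etfree_form B
  | fand A B => etfree_form A && etfree_form B
  | f_or A B => etfree_form A && etfree_form B
  end.

(* opening: replace bound index k by the (closed-for-indices) term u *)
Fixpoint open_term (k : nat) (u : term) (t : term) : term :=
  match t with
  | tvar x => tvar x
  | tbvar i => if i == k then u else tbvar i
  | tapp f ts => tapp f (map (open_term k u) ts)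
  | teps A => teps (open_form k.+1 u A)
  | ttau A => ttau (open_form k.+1 u A)
  end
with open_form (k : nat) (u : term) (A : formula) : formula :=
  match A with
  | fatom P ts => fatom P (map (open_term k u) ts)
  | fbot => fbot
  | fimp A B => fimp (open_form k u A) (open_form k u B)
  | fand A B => fand (open_form k u A) (open_form k u B)
  | f_or A B => f_or (open_form k u A) (open_form k u B)
  end.

Definition inst (A : formula) (t : term) : formula := open_form 0 t A.

Fixpoint subst_term (s : nat -> term) (t : term) : term :=
  match t with
  | tvar x => s x
  | tbvar i => tbvar i
  | tapp f ts => tapp f (map (subst_term s) ts)
  | teps A => teps (subst_form s A)
  | ttau A => ttau (subst_form s A)
  end
with subst_form (s : nat -> term) (A : formula) : formula :=
  match A with
  | fatom P ts => fatom P (map (subst_term s) ts)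
  | fbot => fbot
  | fimp A B => fimp (subst_form s A) (subst_form s B)
  | fand A B => fand (subst_form s A) (subst_form s B)
  | f_or A B => f_or (subst_form s A) (subst_form s B)
  end.

Fixpoint pinst (s : nat -> formula) (P : pform) : formula :=
  match P with
  | pvar p => s p
  | pbot => fbot
  | pimp A B => fimp (pinst s A) (pinst s B)
  | pand A B => fand (pinst s A) (pinst s B)
  | por A B => f_or (pinst s A) (pinst s B)
  end.

Inductive deriv (crit : bool) (m : nat) : formula -> Prop :=
| d_inst (P : pform) (s : nat -> formula) :
    LCm_thm m P -> (forall p, wf_form 0 (s p)) -> deriv crit m (pinst s P)
| d_crit_eps (A : formula) (t : term) :
    crit -> wf_form 1 A -> wf_term 0 t ->
    deriv crit m (fimp (inst A t) (inst A (teps A)))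
| d_crit_tau (A : formula) (t : term) :
    crit -> wf_form 1 A -> wf_term 0 t ->
    deriv crit m (fimp (inst A (ttau A)) (inst A t))
| d_mp (A B : formula) :
    deriv crit m (fimp A B) -> deriv crit m A -> deriv crit m B.

Definition prov_et (m : nat) (A : formula) : Prop := deriv true m A.
Definition prov_L (m : nat) (A : formula) : Prop := deriv false m A.

Definition is_epstau (t : term) : bool :=
  match t with teps _ => true | ttau _ => true | _ => false end.

Definition subst_list (xs : seq nat) (es : seq term) : nat -> term :=
  fun v => if v \in xs then nth (tvar v) es (index v xs) else tvar v.

(* B_1 \/ ... \/ B_k (right nested), for a nonempty list *)
Fixpoint bigor (l : seq formula) : formula :=
  match l with
  | [::] => fbot
  | a :: l' => if l' is [::] then a else f_or a (bigor l')
  end.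

Definition first_et_theorem (m : nat) : Prop :=
  forall (A : formula) (xs : seq nat) (es : seq term),
    wf_form 0 A -> etfree_form A -> uniq xs -> size es = size xs ->
    all (fun e => is_epstau e && wf_term 0 e) es ->
    prov_et m (subst_form (subst_list xs es) A) ->
    exists tss : seq (seq term),
      0 < size tss /\
      all (fun ts => (size ts == size xs) &&
                     all (fun t => etfree_term t && wf_term 0 t) ts) tss /\
      prov_L m (bigor [seq subst_form (subst_list xs ts) A | ts <- tss]).

End Syntax.

(* Main.v *)
Require Import Defs.
From mathcomp Require Import all_boot.
From mathcomp Require Import boolp classical_sets.
From Stdlib Require ClassicalEpsilon Classical_Prop FunctionalExtensionality.
Require Stdlib.Lists.List.

Set Implicit Arguments. Unset Strict Implicit. Unset Printing Implicit Defensive.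

Section Main.
Variables (F Pr : Type) (arF : F -> nat) (arP : Pr -> nat).
Local Notation term := (term F Pr).
Local Notation formula := (formula F Pr).
Local Notation wft := (wf_term arF arP).
Local Notation wff := (wf_form arF arP).

Section Ind.
Variables (Pt : term -> Prop) (Pf : formula -> Prop).
Hypothesis Hvar : forall x, Pt (tvar F Pr x).
Hypothesis Hbvar : forall i, Pt (tbvar F Pr i).
Hypothesis Happ : forall f ts, List.Forall Pt ts -> Pt (tapp f ts).
Hypothesis Heps : forall A, Pf A -> Pt (teps A).
Hypothesis Htau : forall A, Pf A -> Pt (ttau A).
Hypothesis Hatom : forall P ts, List.Forall Pt ts -> Pf (fatom P ts).
Hypothesis Hbot : Pf (fbot F Pr).
Hypothesis Himp : forall A B, Pf A -> Pf B -> Pf (fimp A B).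
Hypothesis Hand : forall A B, Pf A -> Pf B -> Pf (fand A B).
Hypothesis Hor : forall A B, Pf A -> Pf B -> Pf (f_or A B).

Fixpoint tind (t : term) : Pt t :=
  match t with
  | tvar x => Hvar x
  | tbvar i => Hbvar i
  | tapp f ts => Happ f ((fix go (l : seq term) : List.Forall Pt l :=
       match l with
       | [::] => List.Forall_nil Pt
       | u :: l' => List.Forall_cons u (tind u) (go l') end) ts)
  | teps A => Heps (find A)
  | ttau A => Htau (find A)
  end
with find (A : formula) : Pf A :=
  match A with
  | fatom P ts => Hatom P ((fix go (l : seq term) : List.Forall Pt l :=
       match l with
       | [::] => List.Forall_nil Pt
       | u :: l' => List.Forall_cons u (tind u) (go l') end) ts)
  | fbot => Hbot
  | fimp A B => Himp (find A) (find B)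
  | fand A B => Hand (find A) (find B)
  | f_or A B => Hor (find A) (find B)
  end.

Lemma tf_ind : (forall t, Pt t) /\ (forall A, Pf A).
Proof. split; [exact: tind | exact: find]. Qed.
End Ind.

Lemma Forall_all_impl (P Q : term -> Prop) (q : pred term) ts :
  List.Forall P ts -> all q ts -> (forall t, P t -> q t -> Q t) -> List.Forall Q ts.
Proof.
elim=> [|t l Pt _ IH] //= /andP[qt ql] H; constructor; [exact: H | exact: IH].
Qed.

Lemma Forall_map_eq (X : Type) (f g : term -> X) ts :
  List.Forall (fun t => f t = g t) ts -> map f ts = map g ts.
Proof. by elim=> [|t l E _ IH] //=; rewrite E IH. Qed.

Lemma Forall_all (q : pred term) ts :
  List.Forall (fun t => q t) ts -> all q ts.
Proof. by elim=> [|t l E _ IH] //=; rewrite E IH. Qed.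

Definition D (u : term) : bool := etfree_term u && wft 0 u.

Definition scons (u : term) (r : nat -> term) : nat -> term :=
  fun i => match i with 0 => u | j.+1 => r j end.

Definition upd (r : nat -> term) (k : nat) (v : term) : nat -> term :=
  fun i => if i == k then v else r i.

Definition pick (P : term -> Prop) : term :=
  ClassicalEpsilon.epsilon (inhabits (tvar F Pr 0))
    (fun u => D u /\ (P u \/ ~ exists w, D w /\ P w)).

Lemma pick_all (P : term -> Prop) :
  D (pick P) /\ (P (pick P) \/ ~ exists w, D w /\ P w).
Proof.
apply: (ClassicalEpsilon.epsilon_spec (inhabits (tvar F Pr 0))
    (fun u => D u /\ (P u \/ ~ exists w, D w /\ P w))).
case: (Classical_Prop.classic (exists w, D w /\ P w)) => [[w [Dw Pw]]|N].
  by exists w; split=> //; left.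
by exists (tvar F Pr 0); split=> //; right.
Qed.

Lemma pick_D P : D (pick P).
Proof. by case: (pick_all P). Qed.

Lemma pick_spec (P : term -> Prop) : (exists w, D w /\ P w) -> P (pick P).
Proof. by move=> H; case: (pick_all P) => _ [//|]. Qed.

Section Eval.
Variable T : formula -> Prop.

Definition pick_max (g : term -> formula) : term :=
  pick (fun u => forall u', D u' -> T (fimp (g u') (g u))).
Definition pick_min (g : term -> formula) : term :=
  pick (fun u => forall u', D u' -> T (fimp (g u) (g u'))).

Fixpoint evt (r : nat -> term) (t : term) {struct t} : term :=
  match t with
  | tvar x => tvar F Pr x
  | tbvar i => r i
  | tapp f ts => tapp f (map (evt r) ts)
  | teps A => pick_max (fun u => evf (scons u r) A)
  | ttau A => pick_min (fun u => evf (scons u r) A)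
  end
with evf (r : nat -> term) (A : formula) {struct A} : formula :=
  match A with
  | fatom P ts => fatom P (map (evt r) ts)
  | fbot => fbot F Pr
  | fimp A B => fimp (evf r A) (evf r B)
  | fand A B => fand (evf r A) (evf r B)
  | f_or A B => f_or (evf r A) (evf r B)
  end.

Local Notation funext := FunctionalExtensionality.functional_extensionality.

Lemma all2_help (p q : pred term) ts : all p ts -> all q ts -> all (fun t => p t && q t) ts.
Proof. by elim: ts => //= t ts IH /andP[a b] /andP[c d]; rewrite a c IH. Qed.

Lemma ev_env : (forall t n r r', wft n t -> (forall i, i < n -> r i = r' i) -> evt r t = evt r' t)
  /\ (forall A n r r', wff n A -> (forall i, i < n -> r i = r' i) -> evf r A = evf r' A).
Proof.
apply: tf_ind => //.
- by move=> i n r r' /= Hi H; apply: H.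
- move=> f ts IH n r r' /= /andP[_ wts] H; congr tapp; apply: Forall_map_eq.
  by apply: (Forall_all_impl IH wts) => t IHt wt; exact: IHt _ _ _ wt H.
- move=> A IH n r r' /= wA H; congr pick_max; apply: funext => u.
  apply: (IH n.+1) => // -[|i] //=; rewrite ltnS; exact: H.
- move=> A IH n r r' /= wA H; congr pick_min; apply: funext => u.
  apply: (IH n.+1) => // -[|i] //=; rewrite ltnS; exact: H.
- move=> P ts IH n r r' /= /andP[_ wts] H; congr fatom; apply: Forall_map_eq.
  by apply: (Forall_all_impl IH wts) => t IHt wt; exact: IHt _ _ _ wt H.
- by move=> A B IHA IHB n r r' /= /andP[wA wB] H; rewrite (IHA n r r') // (IHB n r r').
- by move=> A B IHA IHB n r r' /= /andP[wA wB] H; rewrite (IHA n r r') // (IHB n r r').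
- by move=> A B IHA IHB n r r' /= /andP[wA wB] H; rewrite (IHA n r r') // (IHB n r r').
Qed.

Lemma ev_closed t r r' : wft 0 t -> evt r t = evt r' t.
Proof. by move=> w; apply: (ev_env.1 t 0). Qed.

Lemma ev_open u v (Hu : forall r, evt r u = v) :
  (forall t k r, evt r (open_term k u t) = evt (upd r k v) t) /\
  (forall A k r, evf r (open_form k u A) = evf (upd r k v) A).
Proof.
apply: tf_ind => //.
- by move=> i k r /=; rewrite /upd; case: (i == k).
- move=> f ts IH k r /=; congr tapp; rewrite -map_comp; apply: Forall_map_eq.
  by apply: (Forall_all_impl (q := predT) IH) => [|t IHt _]; [exact: all_predT | exact: IHt].
- move=> A IH k r /=; congr pick_max; apply: funext => w; rewrite IH; congr evf.
  by apply: funext => -[|i].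
- move=> A IH k r /=; congr pick_min; apply: funext => w; rewrite IH; congr evf.
  by apply: funext => -[|i].
- move=> P ts IH k r /=; congr fatom; rewrite -map_comp; apply: Forall_map_eq.
  by apply: (Forall_all_impl (q := predT) IH) => [|t IHt _]; [exact: all_predT | exact: IHt].
- by move=> A B IHA IHB k r /=; rewrite IHA IHB.
- by move=> A B IHA IHB k r /=; rewrite IHA IHB.
- by move=> A B IHA IHB k r /=; rewrite IHA IHB.
Qed.

Lemma ev_D : (forall t n r, wft n t -> (forall i, D (r i)) -> D (evt r t)) /\
  (forall A n r, wff n A -> (forall i, D (r i)) -> etfree_form (evf r A) && wff 0 (evf r A)).
Proof.
apply: tf_ind => //.
- by move=> i n r _ H; exact: H.
- move=> f ts IH n r /= /andP[sz wts] H.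
  have: all (fun t => D (evt r t)) ts.
    apply: Forall_all; apply: (Forall_all_impl IH wts) => t IHt wt; exact: IHt _ _ wt H.
  move=> H'; rewrite /D /= size_map sz /= !all_map.
  by apply/andP; split; apply: sub_all H' => x /andP[].
- by move=> A _ n r _ _; exact: pick_D.
- by move=> A _ n r _ _; exact: pick_D.
- move=> P ts IH n r /= /andP[sz wts] H.
  have: all (fun t => D (evt r t)) ts.
    apply: Forall_all; apply: (Forall_all_impl IH wts) => t IHt wt; exact: IHt _ _ wt H.
  move=> H'; rewrite /= size_map sz /= !all_map.
  by apply/andP; split; apply: sub_all H' => x /andP[].
- move=> A B IHA IHB n r /= /andP[wA wB] H.
  by case/andP: (IHA n r wA H) => -> ->; case/andP: (IHB n r wB H) => -> ->.
- move=> A B IHA IHB n r /= /andP[wA wB] H.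
  by case/andP: (IHA n r wA H) => -> ->; case/andP: (IHB n r wB H) => -> ->.
- move=> A B IHA IHB n r /= /andP[wA wB] H.
  by case/andP: (IHA n r wA H) => -> ->; case/andP: (IHB n r wB H) => -> ->.
Qed.

Lemma ev_pinst r s P : evf r (pinst s P) = pinst (fun p => evf r (s p)) P.
Proof.
by elim: P => [p||A IHA B IHB|A IHA B IHB|A IHA B IHB] //=; rewrite IHA IHB.
Qed.

Lemma ev_subst r s :
  (forall t, etfree_term t -> wft 0 t -> evt r (subst_term s t) = subst_term (fun x => evt r (s x)) t) /\
  (forall A, etfree_form A -> wff 0 A -> evf r (subst_form s A) = subst_form (fun x => evt r (s x)) A).
Proof.
apply: tf_ind => //.
- move=> f ts IH /= e /andP[_ w]; congr tapp; rewrite -map_comp; apply: Forall_map_eq.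
  by apply: (Forall_all_impl IH (all2_help e w)) => t IHt /andP[]; exact: IHt.
- move=> P ts IH /= e /andP[_ w]; congr fatom; rewrite -map_comp; apply: Forall_map_eq.
  by apply: (Forall_all_impl IH (all2_help e w)) => t IHt /andP[]; exact: IHt.
- by move=> A B IHA IHB /= /andP[eA eB] /andP[wA wB]; rewrite IHA ?IHB.
- by move=> A B IHA IHB /= /andP[eA eB] /andP[wA wB]; rewrite IHA ?IHB.
- by move=> A B IHA IHB /= /andP[eA eB] /andP[wA wB]; rewrite IHA ?IHB.
Qed.

End Eval.
Section Theory.
Variable m : nat.
Local Notation PL := (deriv arF arP false m).

Lemma nth_wf (l : seq formula) : all (wff 0) l -> forall p, wff 0 (nth (fbot F Pr) l p).
Proof. by elim: l => [|a l IH] /= H [|p] //=; case/andP: H => // _ /IH. Qed.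

Lemma dinst b P (l : seq formula) : LCm_thm m P -> all (wff 0) l ->
  deriv arF arP b m (pinst (nth (fbot F Pr) l) P).
Proof. by move=> HP Hl; apply: d_inst => //; exact: nth_wf. Qed.

Lemma pinst_wf s P : (forall p, wff 0 (s p)) -> wff 0 (pinst s P).
Proof. by move=> H; elim: P => [p||A IHA B IHB|A IHA B IHB|A IHA B IHB] //=; rewrite IHA IHB. Qed.

Lemma deriv_wf B : PL B -> wff 0 B.
Proof.
elim=> //.
- by move=> P s _ H; exact: pinst_wf.
- by move=> A C _ /= /andP[].
Qed.

Section Hilb.
Variables (A B C : formula) (wA : wff 0 A) (wB : wff 0 B) (wC : wff 0 C).

Lemma pK : PL (fimp A (fimp B A)).
Proof. by apply: (dinst false (ip_k m (pvar 0) (pvar 1)) (l := [:: A; B])); rewrite /= wA wB. Qed.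
Lemma pS : PL (fimp (fimp A (fimp B C)) (fimp (fimp A B) (fimp A C))).
Proof. by apply: (dinst false (ip_s m (pvar 0) (pvar 1) (pvar 2)) (l := [:: A; B; C])); rewrite /= wA wB wC. Qed.
Lemma pOrI1 : PL (fimp A (f_or A B)).
Proof. by apply: (dinst false (ip_orI1 m (pvar 0) (pvar 1)) (l := [:: A; B])); rewrite /= wA wB. Qed.
Lemma pOrI2 : PL (fimp B (f_or A B)).
Proof. by apply: (dinst false (ip_orI2 m (pvar 0) (pvar 1)) (l := [:: A; B])); rewrite /= wA wB. Qed.
Lemma pOrE : PL (fimp (fimp A C) (fimp (fimp B C) (fimp (f_or A B) C))).
Proof. by apply: (dinst false (ip_orE m (pvar 0) (pvar 1) (pvar 2)) (l := [:: A; B; C])); rewrite /= wA wB wC. Qed.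
End Hilb.

Lemma pI A : wff 0 A -> PL (fimp A A).
Proof.
move=> wA.
have wAA : wff 0 (fimp A A) by rewrite /= wA.
apply: d_mp (pK wA wA).
apply: d_mp (pK wA wAA).
exact: (pS wA wAA wA).
Qed.

Lemma pcomp A B C : wff 0 A -> wff 0 B -> wff 0 C -> PL (fimp A B) -> PL (fimp B C) -> PL (fimp A C).
Proof.
move=> wA wB wC AB BC.
have wBC : wff 0 (fimp B C) by rewrite /= wB wC.
have ABC : PL (fimp A (fimp B C)) by apply: d_mp BC; exact: pK.
apply: d_mp AB; apply: d_mp ABC; exact: pS.
Qed.

Lemma bigor_cons (a : formula) l : l <> [::] -> bigor (a :: l) = f_or a (bigor l).
Proof. by case: l. Qed.

Lemma bigor_wf (l : seq formula) : all (wff 0) l -> wff 0 (bigor l).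
Proof.
elim: l => //= a l IH /andP[wa wl]; case: l IH wl => //= b l IH wl.
by rewrite wa IH.
Qed.

Lemma bigor_cat_l (l2 : seq formula) : l2 <> [::] -> forall l1, l1 <> [::] ->
  all (wff 0) (l1 ++ l2) -> PL (fimp (bigor l1) (bigor (l1 ++ l2))).
Proof.
move=> n2; elim=> [//|a l1 IH] _ W.
case: l1 IH W => [|b l1] IH W.
  rewrite cat1s (bigor_cons a n2); case/andP: W => wa W.
  by apply: pOrI1 => //; exact: bigor_wf.
have W' := W; rewrite /= all_cat in W'.
move: W' => /andP[wa /andP[wb /andP[wl1 wl2]]].
have wl1' : all (wff 0) (b :: l1) by rewrite /= wb wl1.
have wl12 : all (wff 0) (b :: l1 ++ l2) by rewrite /= wb all_cat wl1 wl2.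
have nb : forall l : seq formula, b :: l <> [::] by [].
rewrite cat_cons (bigor_cons a (nb l1)) (bigor_cons a (nb (l1 ++ l2))).
set X := bigor (b :: l1); set Y := bigor (b :: l1 ++ l2).
have wX : wff 0 X by exact: bigor_wf.
have wY : wff 0 Y by exact: bigor_wf.
have HX : PL (fimp X (f_or a Y)).
  apply: (pcomp wX wY) => //; first by rewrite /= wa wY.
    exact: IH.
  exact: pOrI2.
have HA : PL (fimp a (f_or a Y)) by exact: pOrI1.
have wAY : wff 0 (f_or a Y) by rewrite /= wa wY.
exact: (d_mp (d_mp (pOrE wa wX wAY) HA) HX).
Qed.

Lemma bigor_cat_r (l2 : seq formula) : l2 <> [::] -> forall l1,
  all (wff 0) (l1 ++ l2) -> PL (fimp (bigor l2) (bigor (l1 ++ l2))).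
Proof.
move=> n2; elim=> [|a l1 IH] W.
  by apply: pI; apply: bigor_wf.
have n12 : l1 ++ l2 <> [::] by case: l1 {IH W} => //.
rewrite cat_cons (bigor_cons a n12).
move: W => /= /andP[wa W].
have w2 : all (wff 0) l2 by move: W; rewrite all_cat => /andP[].
apply: (pcomp (B := bigor (l1 ++ l2))); rewrite /= ?wa; try exact: bigor_wf.
  exact: IH.
by apply: pOrI2 => //; exact: bigor_wf.
Qed.

Section Th.
Variables (xs : seq nat) (A0 : formula).
Hypotheses (wA0 : wff 0 A0) (eA0 : etfree_form A0).

Definition good (ts : seq term) : bool :=
  (size ts == size xs) && all (fun t => etfree_term t && wf_term arF arP 0 t) ts.
Definition insts (tss : seq (seq term)) : seq formula :=
  [seq subst_form (subst_list xs ts) A0 | ts <- tss].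
Definition Excl (X : formula -> Prop) :=
  forall tss, 0 < size tss -> all good tss -> ~ X (bigor (insts tss)).
Definition Th (X : formula -> Prop) :=
  (forall B, PL B -> X B) /\ (forall B C, X (fimp B C) -> X B -> X C).
Definition MaxT (X : formula -> Prop) := [/\ Th X, Excl X &
  forall B, wff 0 B -> ~ X B -> exists tss, [/\ 0 < size tss, all good tss &
     X (fimp B (bigor (insts tss)))]].

Lemma nth_prop (p : pred term) d (ts : seq term) i : p d -> all p ts -> p (nth d ts i).
Proof. move=> pd; elim: ts i => [|t ts IH] [|i] //= /andP[pt pts] //; exact: IH. Qed.

Lemma subst_wf s : (forall x, wft 0 (s x)) ->
  (forall t, etfree_term t -> wft 0 t -> wft 0 (subst_term s t)) /\
  (forall A, etfree_form A -> wff 0 A -> wff 0 (subst_form s A)).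
Proof.
move=> Hs; apply: tf_ind => //.
- by move=> x _ _; exact: Hs.
- move=> f ts IH /= e /andP[sz w]; rewrite size_map sz /= all_map.
  have := Forall_all (Forall_all_impl IH (all2_help e w) (Q := fun t => wft 0 (subst_term s t))
     (fun t IHt etw => let: conj a b := andP etw in IHt a b)).
  by [].
- move=> P ts IH /= e /andP[sz w]; rewrite size_map sz /= all_map.
  have := Forall_all (Forall_all_impl IH (all2_help e w) (Q := fun t => wft 0 (subst_term s t))
     (fun t IHt etw => let: conj a b := andP etw in IHt a b)).
  by [].
- by move=> A B IHA IHB /= /andP[eA eB] /andP[wA wB]; rewrite IHA ?IHB.
- by move=> A B IHA IHB /= /andP[eA eB] /andP[wA wB]; rewrite IHA ?IHB.
- by move=> A B IHA IHB /= /andP[eA eB] /andP[wA wB]; rewrite IHA ?IHB.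
Qed.

Lemma inst_wf ts : good ts -> wff 0 (subst_form (subst_list xs ts) A0).
Proof.
case/andP=> _ g; apply: (subst_wf _).2 => // x; rewrite /subst_list.
case: (x \in xs) => //.
apply: (nth_prop (p := wft 0)) => //.
by apply: sub_all g => t /andP[].
Qed.

Lemma insts_wf tss : all good tss -> all (wff 0) (insts tss).
Proof. by elim: tss => //= ts tss IH /andP[g gs]; rewrite inst_wf // IH. Qed.

Section T.
Variable T : formula -> Prop.
Hypothesis HT : MaxT T.

Lemma tBase B : PL B -> T B. Proof. by case: HT => -[H _] _ _; exact: H. Qed.
Lemma tMP B C : T (fimp B C) -> T B -> T C. Proof. by case: HT => -[_ H] _ _; exact: H. Qed.
Lemma tK B C : wff 0 B -> wff 0 C -> T C -> T (fimp B C).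
Proof. by move=> wB wC; apply: tMP; apply: tBase; exact: pK. Qed.
Lemma tS B C E : wff 0 B -> wff 0 C -> wff 0 E ->
  T (fimp B (fimp C E)) -> T (fimp B C) -> T (fimp B E).
Proof. by move=> wB wC wE H1 H2; apply: tMP H2; apply: tMP H1; apply: tBase; exact: pS. Qed.
Lemma tcomp B C E : wff 0 B -> wff 0 C -> wff 0 E ->
  T (fimp B C) -> PL (fimp C E) -> T (fimp B E).
Proof.
move=> wB wC wE H1 H2; apply: (tS (C := C)) => //.
by apply: tK => //; [rewrite /= wC wE | exact: tBase].
Qed.

Lemma primeT B C : wff 0 B -> wff 0 C -> T (f_or B C) -> T B \/ T C.
Proof.
move=> wB wC H.
case: (Classical_Prop.classic (T B)) => [|nB]; first by left.
case: (Classical_Prop.classic (T C)) => [|nC]; first by right.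
exfalso; case: HT => _ Ex Mx.
have [tss1 [s1 g1 H1]] := Mx B wB nB.
have [tss2 [s2 g2 H2]] := Mx C wC nC.
have g12 : all good (tss1 ++ tss2) by rewrite all_cat g1 g2.
have w12 := insts_wf g12.
have w1 := insts_wf g1; have w2 := insts_wf g2.
have n1 : insts tss1 <> [::] by move: s1; rewrite /insts; case: (tss1).
have n2 : insts tss2 <> [::] by move: s2; rewrite /insts; case: (tss2).
have E12 : insts (tss1 ++ tss2) = insts tss1 ++ insts tss2 by rewrite /insts map_cat.
set L := bigor (insts (tss1 ++ tss2)).
have wL : wff 0 L by exact: bigor_wf.
have HB : T (fimp B L).
  apply: (tcomp (C := bigor (insts tss1))) => //; first exact: bigor_wf.
  rewrite /L E12; apply: bigor_cat_l => //; by rewrite -E12.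
have HC : T (fimp C L).
  apply: (tcomp (C := bigor (insts tss2))) => //; first exact: bigor_wf.
  rewrite /L E12; apply: bigor_cat_r => //; by rewrite -E12.
apply: (Ex (tss1 ++ tss2)) => //; first by rewrite size_cat addn_gt0 s1.
apply: tMP H; apply: tMP HC; apply: tMP HB; apply: tBase; exact: pOrE.
Qed.

Lemma chainT s : (forall p, wff 0 (s p)) -> forall n j, 0 < n ->
  T (pinst s (chain_disj pvar j n)) ->
  exists i, [/\ j <= i, i < j + n & T (fimp (s i) (s i.+1))].
Proof.
move=> ws; elim=> [//|n IH] j _.
case: n IH => [|n] IH H.
  by exists j; split => //; rewrite addn1.
have wa : wff 0 (fimp (s j) (s j.+1)) by rewrite /= !ws.
have wb : wff 0 (pinst s (chain_disj pvar j.+1 n.+1)) by exact: pinst_wf.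
case: (primeT wa wb H) => [Ha|Hb].
  by exists j; split => //; rewrite -{1}(addn0 j) ltn_add2l.
have [i [ji il Ti]] := IH j.+1 isT Hb.
exists i; split => //; first exact: ltnW.
by rewrite addnS -addSn.
Qed.

Lemma seq_build (R : term -> term -> Prop) :
  (forall w, D w -> exists w', D w' /\ R w w') ->
  forall n, exists h : nat -> term, (forall i, D (h i)) /\ (forall i, i < n -> R (h i) (h i.+1)).
Proof.
move=> H; elim=> [|n [h [Dh Rh]]].
  by exists (fun _ => tvar F Pr 0); split.
have [w' [Dw' Rw']] := H (h n) (Dh n).
exists (fun i => if i <= n then h i else w'); split.
  by move=> i; case: (i <= n).
move=> i; rewrite ltnS => lin; rewrite lin.
case: (ltnP i n) => [lt|ge].
  exact: Rh.
have -> : i = n by apply/eqP; rewrite eqn_leq lin ge.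
by [].  
Qed.

Hypothesis m0 : 0 < m.

Lemma max_exists g : (forall u, D u -> wff 0 (g u)) ->
  exists w, D w /\ forall u, D u -> T (fimp (g u) (g w)).
Proof.
move=> wg; apply: Classical_Prop.NNPP => N.
have H : forall w, D w -> exists w', D w' /\ ~ T (fimp (g w') (g w)).
  move=> w Dw; apply: Classical_Prop.NNPP => N2; apply: N; exists w; split=> // u Du.
  by apply: Classical_Prop.NNPP => N3; apply: N2; exists u.
have [h [Dh Rh]] := seq_build H m.+1.
pose s p := g (h (m.+1 - p)).
have ws : forall p, wff 0 (s p) by move=> p; apply: wg.
have HB : T (pinst s (Bm_axiom m pvar)) by apply: tBase; apply: d_inst => //; exact: lc_Bm.
have [i [i1 im Ti]] := chainT ws m0 HB.
have im' : i <= m by rewrite add1n ltnS in im.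
apply: (Rh (m - i)); first by rewrite ltnS leq_subr.
by move: Ti; rewrite /s subSS subSn.
Qed.

Lemma min_exists g : (forall u, D u -> wff 0 (g u)) ->
  exists w, D w /\ forall u, D u -> T (fimp (g w) (g u)).
Proof.
move=> wg; apply: Classical_Prop.NNPP => N.
have H : forall w, D w -> exists w', D w' /\ ~ T (fimp (g w) (g w')).
  move=> w Dw; apply: Classical_Prop.NNPP => N2; apply: N; exists w; split=> // u Du.
  by apply: Classical_Prop.NNPP => N3; apply: N2; exists u.
have [h [Dh Rh]] := seq_build H m.+1.
pose s p := g (h p).
have ws : forall p, wff 0 (s p) by move=> p; apply: wg.
have HB : T (pinst s (Bm_axiom m pvar)) by apply: tBase; apply: d_inst => //; exact: lc_Bm.
have [i [i1 im Ti]] := chainT ws m0 HB.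
by apply: (Rh i); first by rewrite -(add1n m).
Qed.

End T.
Definition UU (X : formula -> Prop) : formula -> Prop := fun B => X B \/ PL B.
Definition PP (X : set formula) : Prop :=
  [/\ (forall B, X B -> wff 0 B), Th (UU X) & Excl (UU X)].

Lemma exists_maxT : Excl PL -> exists T, MaxT T.
Proof.
move=> ExB.
have [A [[wA ThA ExA] Amax]] : exists A, PP A /\ forall B, proper A B -> ~ PP B.
  apply: Zorn_bigcup => FF FP Ftot; split.
  - by move=> B [X FX XB]; case: (FP X FX) => wX _ _; exact: wX.
  - split; first by move=> B HB; right.
    have key : forall Z, FF Z -> UU Z = UU Z -> forall C, UU Z C -> UU (bigcup FF id) C.
      by move=> Z FZ _ C [ZC|PC]; [left; exists Z | right].
    have ThZ : forall Z, FF Z -> forall B C, UU Z (fimp B C) -> UU Z B -> UU Z C.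
      by move=> Z FZ; case: (FP Z FZ) => _ [_ H] _.
    move=> B C [[X FX XBC]|PBC] [[Y FY YB]|PB].
    + case: (Ftot X Y FX FY) => [XY|YX].
        by apply: (key Y FY erefl); apply: (ThZ Y FY B); left; [exact: XY|].
      by apply: (key X FX erefl); apply: (ThZ X FX B); left; [|exact: YX].
    + by apply: (key X FX erefl); apply: (ThZ X FX B); [left|right].
    + by apply: (key Y FY erefl); apply: (ThZ Y FY B); [right|left].
    + by right; exact: d_mp PBC PB.
  - move=> tss s0 gs [[X FX XB]|PB].
      by case: (FP X FX) => _ _ Ex; apply: (Ex tss s0 gs); left.
    exact: (ExB tss s0 gs).
have ThT := ThA; case: ThT => Tbase TMP.
exists (UU A); split => // B wB nB.
pose Y : set formula := fun E => wff 0 E /\ UU A (fimp B E).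
have tK : forall E, wff 0 E -> UU A E -> UU A (fimp B E).
  move=> E wE HE; apply: (TMP _ _ _ HE); apply: Tbase; exact: pK.
have pY : proper A Y.
  split.
    move=> E AE; split; first exact: wA.
    by apply: tK; [exact: wA | left].
  move=> YA; apply: nB; left; apply: YA; split => //.
  by apply: Tbase; exact: pI.
have YU : forall E, UU Y E -> wff 0 E /\ UU A (fimp B E).
  move=> E [//|PE]; have wE := deriv_wf PE; split => //.
  by apply: tK => //; right.
have nPY := Amax Y pY.
have ThY : Th (UU Y).
  split; first by move=> E PE; right.
  move=> C E /YU [wCE HCE] /YU [wC HC].
  have wE : wff 0 E by move: wCE => /= /andP[].
  left; split => //.
  apply: (TMP _ _ _ HC); apply: (TMP _ _ _ HCE); apply: Tbase; exact: pS.
apply: Classical_Prop.NNPP => N; apply: nPY; split => //.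
  by move=> E [].
move=> tss s0 gs /YU [_ H]; apply: N; exists tss; split => //.
Qed.

Definition r0 : nat -> term := fun _ => tvar F Pr 0.

Lemma sound T (HT : MaxT T) (m0 : 0 < m) :
  forall B, deriv arF arP true m B -> T (evf T r0 B).
Proof.
have Dr0 : forall i, D (r0 i) by [].
move=> B; elim=> {B}.
- move=> P s HP ws; rewrite ev_pinst; apply: (tBase HT); apply: d_inst => // p.
  by case/andP: ((ev_D T).2 (s p) 0 r0 (ws p) Dr0).
- move=> A t _ wA wt /=.
  set g := fun u => evf T (scons u r0) A.
  have wg : forall u, D u -> wff 0 (g u).
    move=> u Du; have Hs : forall i, D (scons u r0 i) by case.
    by case/andP: ((ev_D T).2 A 1 (scons u r0) wA Hs).
  set v := evt T r0 t.
  have Dv : D v := (ev_D T).1 t 0 r0 wt Dr0.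
  have E1 : evf T r0 (open_form 0 t A) = g v.
    rewrite ((ev_open (v := v) _).2 A 0 r0); last by move=> r; exact: ev_closed.
    by apply: ((ev_env T).2 A 1) => // -[|i].
  have E2 : evf T r0 (open_form 0 (teps A) A) = g (pick_max T g).
    rewrite ((ev_open (v := pick_max T g) _).2 A 0 r0); last first.
      by move=> r; rewrite (ev_closed T (t := teps A) r r0 wA).
    by apply: ((ev_env T).2 A 1) => // -[|i].
  rewrite /inst E1 E2.
  have := pick_spec (P := fun u => forall u', D u' -> T (fimp (g u') (g u))) (max_exists HT m0 wg).
  by move=> H; apply: H.
- move=> A t _ wA wt /=.
  set g := fun u => evf T (scons u r0) A.
  have wg : forall u, D u -> wff 0 (g u).
    move=> u Du; have Hs : forall i, D (scons u r0 i) by case.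
    by case/andP: ((ev_D T).2 A 1 (scons u r0) wA Hs).
  set v := evt T r0 t.
  have Dv : D v := (ev_D T).1 t 0 r0 wt Dr0.
  have E1 : evf T r0 (open_form 0 t A) = g v.
    rewrite ((ev_open (v := v) _).2 A 0 r0); last by move=> r; exact: ev_closed.
    by apply: ((ev_env T).2 A 1) => // -[|i].
  have E2 : evf T r0 (open_form 0 (ttau A) A) = g (pick_min T g).
    rewrite ((ev_open (v := pick_min T g) _).2 A 0 r0); last first.
      by move=> r; rewrite (ev_closed T (t := ttau A) r r0 wA).
    by apply: ((ev_env T).2 A 1) => // -[|i].
  rewrite /inst E1 E2.
  have := pick_spec (P := fun u => forall u', D u' -> T (fimp (g u) (g u'))) (min_exists HT m0 wg).
  by move=> H; apply: H.
- by move=> B C _ HBC _ HB; apply: (tMP HT HBC HB).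
Qed.

Lemma main_aux (m0 : 0 < m) es : size es = size xs ->
  all (fun e => is_epstau e && wft 0 e) es ->
  deriv arF arP true m (subst_form (subst_list xs es) A0) ->
  exists tss, [/\ 0 < size tss, all good tss & PL (bigor (insts tss))].
Proof.
move=> ses alles H.
apply: Classical_Prop.NNPP => N.
have ExB : Excl PL.
  by move=> tss s0 gs P; apply: N; exists tss; split.
have [T HT] := exists_maxT ExB.
have := sound HT m0 H.
rewrite ((ev_subst T r0 _).2 A0 eA0 wA0).
set ts := map (evt T r0) es.
have -> : (fun x => evt T r0 (subst_list xs es x)) = subst_list xs ts.
  apply: funext => x; rewrite /subst_list; case: (x \in xs) => //.
  by rewrite /ts; elim: (es) (index x xs) => [|e es' IH] [|i] //=.
have gts : good ts.
  rewrite /good /ts size_map ses eqxx /= all_map.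
  apply: sub_all alles => e /andP[_ we].
  exact: ((ev_D T).1 e 0 r0 we).
case: HT => _ Ex _.
by move=> HH; apply: (Ex [:: ts]) => //=; rewrite gts.
Qed.

End Th.

End Theory.

End Main.

Theorem mainTheorem4 (F Pr : Type) (arF : F -> nat) (arP : Pr -> nat) (m : nat) :
  0 < m -> first_et_theorem arF arP m.
Proof.
move=> m0 A xs es wA eA _ ses alles H.
have [tss [s0 gs P]] := main_aux wA eA m0 ses alles H.
by exists tss.
Qed.
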